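(* Let $(\mathcal A,d)$ be a DGA and let $a,b_1,\dots,b_n\in\mathcal A$ be closed elements such that the degree $|a|$ is even and $a\wedge b_i$ is exact for all $i$. Let $\xi_i$ be any elements with $d\xi_i=a\wedge b_i$. Then $$c=\sum_{i=1}^n \overline{\xi_1}\wedge\cdots\wedge\overline{\xi_{i-1}}\wedge b_i\wedge\xi_{i+1}\wedge\cdots\wedge\xi_n$$ is closed, where $\overline{\xi}=(-1)^{|\xi|}\xi$.
   Context: A DGA is a graded-commutative differential graded algebra over $\mathbb R$ with differential of degree $+1$ satisfying the graded Leibniz rule; $|x|$ denotes the degree of $x$. *)

(* Defs.v *)
From HB Require Import structures.
From mathcomp Require Import all_boot all_order all_algebra.
From mathcomp Require Import reals.
Set Implicit Arguments. Unset Strict Implicit. Unset Printing Implicit Defensive.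
Import Order.TTheory GRing.Theory Num.Theory.
Local Open Scope ring_scope.

(* The underlying algebra is A (an associative unital
   R-algebra); G n is the homogeneous component of degree n; d is the
   differential.  *)
Definition is_cdga (R : realType) (A : algType R) (G : nat -> {pred A})
    (d : A -> A) : Prop :=
  (forall n, 0 \in G n) /\
      (forall n (c : R) x y, x \in G n -> y \in G n -> c *: x + y \in G n) /\
  (* A is the direct sum of the G n *)
      (forall x : A, exists (N : nat) (f : nat -> A),
          (forall k, f k \in G k) /\ x = \sum_(k < N) f k) /\
      (forall (N : nat) (f : nat -> A), (forall k, f k \in G k) ->
          \sum_(k < N) f k = 0 -> forall k, (k < N)%N -> f k = 0) /\
      1 \in G 0%N /\
      (forall p q x y, x \in G p -> y \in G q -> x * y \in G (p + q)%N) /\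
      (forall p q x y, x \in G p -> y \in G q ->
          x * y = ((-1 : R) ^+ (p * q)) *: (y * x)) /\
      (forall (c : R) x y, d (c *: x + y) = c *: d x + d y) /\
      (forall p x, x \in G p -> d x \in G p.+1) /\
      (forall x, d (d x) = 0) /\
      (forall p x y, x \in G p ->
          d (x * y) = d x * y + ((-1 : R) ^+ p) *: (x * d y)).

Definition bar (R : realType) (A : algType R) (r : nat) (xi : A) : A :=
  ((-1 : R) ^+ r) *: xi.

(* Main.v *)
Require Import Defs.
From HB Require Import structures.
From mathcomp Require Import all_boot all_order all_algebra.
From mathcomp Require Import reals.
Import Order.TTheory GRing.Theory Num.Theory.
Local Open Scope ring_scope.

Section Aux.
Variables (R : realType) (A : algType R) (G : nat -> {pred A}) (d : A -> A).
Hypothesis HA : is_cdga G d.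

Lemma cd_lin c x y : d (c *: x + y) = c *: d x + d y.
Proof. by case: HA => _ [_ [_ [_ [_ [_ [_ [H _]]]]]]]. Qed.
Lemma cd_0 : d 0 = 0.
Proof.
have := cd_lin 1 0 0; rewrite !scale1r !addr0 => H.
by apply: (addrI (d 0)); rewrite addr0 -H.
Qed.
Lemma cd_D x y : d (x + y) = d x + d y.
Proof. by have := cd_lin 1 x y; rewrite !scale1r. Qed.
Lemma cd_Z c x : d (c *: x) = c *: d x.
Proof. by have := cd_lin c x 0; rewrite !addr0 cd_0 addr0. Qed.
Lemma cd_leib p x y : x \in G p ->
  d (x * y) = d x * y + ((-1 : R) ^+ p) *: (x * d y).
Proof. by case: HA => _ [_ [_ [_ [_ [_ [_ [_ [_ [_ H]]]]]]]]]; apply: H. Qed.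
Arguments cd_leib {p x} y.
Lemma cG0 n : 0 \in G n.
Proof. by case: HA => H _. Qed.
Lemma cGlin n c x y : x \in G n -> y \in G n -> c *: x + y \in G n.
Proof. by case: HA => _ [H _]; apply: H. Qed.
Lemma cGZ n c x : x \in G n -> c *: x \in G n.
Proof. by move=> Hx; rewrite -[c *: x]addr0; apply: cGlin => //; apply: cG0. Qed.
Lemma cGM p q x y : x \in G p -> y \in G q -> x * y \in G (p + q)%N.
Proof. by case: HA => _ [_ [_ [_ [_ [H _]]]]]; apply: H. Qed.
Lemma cG1 : (1 : A) \in G 0%N.
Proof. by case: HA => _ [_ [_ [_ [H _]]]]. Qed.
Lemma cd1 : d 1 = 0.
Proof.
have := cd_leib 1 cG1; rewrite !mulr1 expr0 scale1r mul1r => H.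
by apply: (addrI (d 1)); rewrite addr0 -H.
Qed.
Lemma cdG p x : x \in G p -> d x \in G p.+1.
Proof. by case: HA => _ [_ [_ [_ [_ [_ [_ [_ [H _]]]]]]]]; apply: H. Qed.

Lemma cG_uniq m m' x : x \in G m -> x \in G m' -> m <> m' -> x = 0.
Proof.
move=> Hm Hm' Hne.
case: HA => _ [_ [_ [Hu _]]].
pose f k := (if k == m then x else 0) - (if k == m' then x else 0).
have Hf : forall k, f k \in G k.
  move=> k; rewrite /f; case: eqP => [->|_]; case: eqP => [E|_].
  - by case: Hne.
  - by rewrite subr0.
  - by rewrite sub0r -scaleN1r; apply: cGZ; rewrite E.
  - by rewrite subr0; apply: cG0.
have := Hu (maxn m m').+1 f Hf.
have -> : \sum_(k < (maxn m m').+1) f k = 0.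
  rewrite /f sumrB -!(big_mkcond (fun k : 'I__ => (k : nat) == _)).
  rewrite !big_ord1_eq !ltnS leq_maxl leq_maxr subrr //.
move=> /(_ erefl m); rewrite ltnS leq_maxl /f eqxx.
by case: eqP => [E|_] //; rewrite subr0 => ->.
Qed.

Variables (p : nat) (a : A).
Hypotheses (Ha : a \in G p) (Hp : ~~ odd p) (Hda : d a = 0).

Lemma a_comm k x : x \in G k -> a * x = x * a.
Proof.
move=> Hx; case: HA => _ [_ [_ [_ [_ [_ [H _]]]]]].
rewrite (H _ _ _ _ Ha Hx) -signr_odd oddM (negbTE Hp) /= expr0 scale1r //.
Qed.

Arguments a_comm {k x}.
Definition PP n (X : 'I_n -> A) := \prod_(j < n) X j.
Definition CC n (b X : 'I_n -> A) (r : 'I_n -> nat) :=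
  \sum_(i < n) ((\prod_(j < n | (j < i)%N) bar (r j) (X j)) * b i
          * \prod_(j < n | (i < j)%N) X j).

Arguments PP {n}.
Arguments CC {n}.
Lemma key n : forall (q : 'I_n -> nat) (b : 'I_n -> A)
    (r : 'I_n -> nat) (X : 'I_n -> A),
  (forall i, b i \in G (q i)) -> (forall i, d (b i) = 0) ->
  (forall i, X i \in G (r i)) -> (forall i, d (X i) = a * b i) ->
  d (PP X) = a * CC b X r /\ d (CC b X r) = 0.
Proof.
elim: n => [|n IH] q b r X Hb Hdb HX HdX.
  by rewrite /PP /CC !big_ord0 cd1 cd_0 mulr0.
have [IH1 IH2] := IH (fun j => q (lift ord0 j)) (fun j => b (lift ord0 j))
  (fun j => r (lift ord0 j)) (fun j => X (lift ord0 j))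
  (fun j => Hb _) (fun j => Hdb _) (fun j => HX _) (fun j => HdX _).
set P' := PP _ in IH1; set C' := CC _ _ _ in IH1 IH2.
have EP : PP X = X ord0 * P' by rewrite /PP big_ord_recl.
have EC : CC b X r = b ord0 * P' + bar (r ord0) (X ord0) * C'.
  rewrite /CC big_ord_recl; congr (_ + _).
    rewrite big_pred0 // mul1r big_mkcond big_ord_recl /= mul1r.
    by [].
  rewrite mulr_sumr; apply: eq_bigr => i _.
  rewrite (big_mkcond (fun j : 'I_n.+1 => (j < _)%N)) big_ord_recl /=.
  rewrite (big_mkcond (fun j : 'I_n.+1 => (_ < j)%N)) big_ord_recl /= mul1r.
  rewrite -!big_mkcond /= !mulrA; congr (_ * _ * _ * _);
    by apply: eq_bigl => j; rewrite !bump0 ltnS.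
have Hcomm : b ord0 * a = a * b ord0 by rewrite (a_comm (Hb ord0)).
split.
  rewrite EP (cd_leib _ (HX ord0)) HdX IH1 EC mulrDr /bar -scalerAl scalerAr.
  by rewrite !scalerAr !mulrA (a_comm (HX ord0)).
rewrite EC cd_D (cd_leib _ (Hb ord0)) Hdb mul0r add0r IH1 /bar -scalerAl cd_Z.
rewrite (cd_leib _ (HX ord0)) IH2 mulr0 scaler0 addr0 HdX mulrA Hcomm.
have [Z|NZ] := eqVneq (a * b ord0) 0.
  by rewrite Z !mul0r !scaler0 addr0.
have Edeg : (p + q ord0)%N = (r ord0).+1.
  case: (eqVneq (p + q ord0)%N (r ord0).+1) => // Hne; exfalso.
  move/eqP: NZ; apply.
  apply: (@cG_uniq (p + q ord0)%N (r ord0).+1); first exact: cGM.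
    by rewrite -HdX; apply: cdG.
  by move/eqP: Hne.
have Es : (-1 : R) ^+ q ord0 = - (-1) ^+ r ord0.
  have : odd (p + q ord0) = odd (r ord0).+1 by rewrite Edeg.
  rewrite oddD (negbTE Hp) /= => Eo.
  rewrite -(signr_odd _ (q ord0)) -(signr_odd _ (r ord0)) Eo /=.
  by case: (odd (r ord0)); rewrite /= ?expr0 ?expr1 ?opprK.
by rewrite Es scaleNr addNr.
Qed.

End Aux.

Theorem proposition2p2 (R : realType) (A : algType R) (G : nat -> {pred A})
    (d : A -> A) (HA : is_cdga G d)
    (n : nat) (p : nat) (a : A) (q : 'I_n -> nat) (b : 'I_n -> A)
    (r : 'I_n -> nat) (xi : 'I_n -> A) :
  a \in G p -> ~~ odd p -> d a = 0 ->
  (forall i, b i \in G (q i)) -> (forall i, d (b i) = 0) ->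
  (forall i, exists y, d y = a * b i) ->
  (forall i, xi i \in G (r i)) -> (forall i, d (xi i) = a * b i) ->
  d (\sum_(i < n)
       ((\prod_(j < n | (j < i)%N) bar (r j) (xi j)) * b i
          * \prod_(j < n | (i < j)%N) xi j)) = 0.
Proof.
move=> Ha Hp Hda Hb Hdb _ HX HdX.
have [_ H] := @key R A G d HA p a Ha Hp n q b r xi Hb Hdb HX HdX; exact: H.
Qed.
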